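(* Let $n\ge 1$ and let $\mathcal F \subseteq 2^{[n]}$ be a simply rooted family of sets such that $\emptyset \in \mathcal F$. Then the cubical set $X(\mathcal F)\subseteq \mathbb R^n$ is acyclic.
   Context: $[n]=\{1,\dots,n\}$ and $2^{[n]}$ is its power set. For $A,B\in 2^{[n]}$, $[A,B]=\{C\in 2^{[n]}: A\subseteq C\subseteq B\}$, and $[i,B]$ means $[\{i\},B]$. A family $\mathcal F\subseteq 2^{[n]}$ is simply rooted if for every non-empty $A\in\mathcal F$ there is $i\in A$ with $[i,A]\subseteq \mathcal F$. The set of cubes of $\mathcal F$ is $\mathcal C(\mathcal F)=\{[A,B]: A\subseteq B,\ [A,B]\subseteq \mathcal F\}$. For $A\subseteq B$, the geometric realization $|[A,B]|$ is $I_1\times\dots\times I_n\subseteq\mathbb R^n$ where $I_i=\{1\}$ if $i\in A$, $I_i=[0,1]$ if $i\in B\setminus A$, and $I_i=\{0\}$ if $i\notin B$. The geometric realization of $\mathcal F$ is the cubical set $X(\mathcal F)=\bigcup_{[A,B]\in\mathcal C(\mathcal F)}|[A,B]|$. A cubical set (finite union of elementary cubes, i.e. products of intervals $[a,b]$ with $a,b\in\mathbb Z$, $b-a\in\{0,1\}$) $X$ is acyclic if it is non-empty and connected and its cubical homology groups $H_i(X)$ are trivial for all $i\ge 1$. *)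

(* Defs.v *)
From HB Require Import structures.
From mathcomp Require Import all_boot all_order all_algebra.
From mathcomp Require Import all_classical all_reals all_analysis.
Set Implicit Arguments. Unset Strict Implicit. Unset Printing Implicit Defensive.
Import Order.TTheory GRing.Theory Num.Theory.
Import numFieldNormedType.Exports.
Local Open Scope classical_set_scope.
Local Open Scope ring_scope.

Definition simply_rooted (n : nat) (F : {set {set 'I_n}}) : Prop :=
  forall A, A \in F -> A != finset.set0 ->
    exists2 i, i \in A & forall C : {set 'I_n}, i \in C -> C \subset A -> C \in F.

Definition is_cube_of (n : nat) (F : {set {set 'I_n}}) (A B : {set 'I_n}) : Prop :=
  A \subset B /\ forall C : {set 'I_n}, A \subset C -> C \subset B -> C \in F.

Definition real_interval (R : realType) (n : nat) (A B : {set 'I_n})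
  : set 'rV[R]_n :=
  [set x | forall i : 'I_n,
     (i \in A -> x ord0 i = 1) /\
     (i \in B -> i \notin A -> 0 <= x ord0 i <= 1) /\
     (i \notin B -> x ord0 i = 0)].

Definition geom_real (R : realType) (n : nat) (F : {set {set 'I_n}})
  : set 'rV[R]_n :=
  [set x | exists A B, is_cube_of F A B /\ @real_interval R n A B x].

(* An elementary cube in R^n: coordinate i is the interval [a, a+1] if
   (Q i).2 = true (nondegenerate), and the point [a, a] otherwise, a = (Q i).1 *)
Definition ecube (n : nat) := {ffun 'I_n -> int * bool}.

Definition ecube_set (R : realType) (n : nat) (Q : ecube n) : set 'rV[R]_n :=
  [set x | forall i : 'I_n,
     ((Q i).1)%:~R <= x ord0 i <= ((Q i).1 + (Q i).2%:Z)%:~R].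

Definition ecube_dim (n : nat) (Q : ecube n) : nat := #|[set i | (Q i).2]|.

Definition ecube_upd (n : nat) (Q : ecube n) (i : 'I_n) (v : int * bool) : ecube n :=
  [ffun j => if j == i then v else Q j].

Definition ecube_sgn (n : nat) (Q : ecube n) (i : 'I_n) : int :=
  (-1) ^+ #|[set j : 'I_n | (j < i)%N && (Q j).2]|.

(* chains are formal Z-linear combinations, given as lists of (coefficient, cube) *)
Definition chain (n : nat) := seq (int * ecube n).

Definition coeff (n : nat) (c : chain n) (Q : ecube n) : int :=
  \sum_(p <- c | p.2 == Q) p.1.

Definition ecube_boundary (n : nat) (Q : ecube n) : chain n :=
  flatten [seq (if (Q i).2 then
                  [:: (ecube_sgn Q i, ecube_upd Q i ((Q i).1 + 1, false));
                      (- ecube_sgn Q i, ecube_upd Q i ((Q i).1, false))]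
                else [::]) | i <- enum 'I_n].

Definition boundary (n : nat) (c : chain n) : chain n :=
  flatten [seq [seq (p.1 * q.1, q.2) | q <- ecube_boundary p.2] | p <- c].

Definition chain_in (R : realType) (n : nat) (X : set 'rV[R]_n) (k : nat)
  (c : chain n) : Prop :=
  forall p, p \in c -> @ecube_set R n p.2 `<=` X /\ ecube_dim p.2 = k.

Definition trivial_homology (R : realType) (n : nat) (X : set 'rV[R]_n) (k : nat)
  : Prop :=
  forall c : chain n, chain_in X k c -> (forall Q, coeff (boundary c) Q = 0) ->
    exists d : chain n, chain_in X k.+1 d /\
      forall Q, coeff (boundary d) Q = coeff c Q.

Definition acyclic (R : realType) (n : nat) (X : set 'rV[R]_n) : Prop :=
  X !=set0 /\ connected X /\ forall k : nat, (1 <= k)%N -> trivial_homology X k.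

(* Main.v *)
Require Import Defs.
From HB Require Import structures.
From mathcomp Require Import all_boot all_order all_algebra.
From mathcomp Require Import all_classical all_reals all_analysis.
From mathcomp Require Import ring lra zify.
Import numFieldNormedType.Exports.
Set Implicit Arguments. Unset Strict Implicit. Unset Printing Implicit Defensive.
Import Order.TTheory GRing.Theory Num.Theory.
Local Open Scope ring_scope.
Definition sg {n} (G B : {set 'I_n}) (j : 'I_n) : int :=
  (-1) ^+ #|[set l : 'I_n | (l < j)%N && (l \in B :\: G)]|.

Lemma sgK n (G B : {set 'I_n}) j : sg G B j * sg G B j = 1.
Proof. by rewrite /sg -[X in _ * X]mulr1 signrMK. Qed.

Lemma sg_step n (G B G' B' : {set 'I_n}) (y j : 'I_n) :
  B :\: G = y |: (B' :\: G') -> y \notin B' :\: G' ->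
  sg G B j = sg G' B' j * (-1) ^+ (y < j)%N.
Proof.
move=> E yD; rewrite /sg E.
case: (ltnP y j) => yj /=.
  have -> : [set l : 'I_n | (l < j)%N && (l \in y |: B' :\: G')] =
     y |: [set l : 'I_n | (l < j)%N && (l \in B' :\: G')].
    apply/setP => l; rewrite !finset.inE; case: (eqVneq l y) => [->|] //=.
    by rewrite yj.
  by rewrite cardsU1 finset.inE (negbTE yD) andbF /= exprD mulrC.
have -> : [set l : 'I_n | (l < j)%N && (l \in y |: B' :\: G')] =
     [set l : 'I_n | (l < j)%N && (l \in B' :\: G')].
  apply/setP => l; rewrite !finset.inE; case: (eqVneq l y) => [->|] //=.
  by rewrite ltnNge yj /=.
by rewrite expr0 mulr1.
Qed.

Lemma sg_step2 n (G B G' B' : {set 'I_n}) (y j : 'I_n) :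
  B :\: G = y |: (B' :\: G') -> y \notin B' :\: G' ->
  sg G' B' j = sg G B j * (-1) ^+ (y < j)%N.
Proof.
move=> E yD; rewrite (sg_step j E yD) -mulrA.
have h := signrMK (y < j)%N (1 : int); rewrite mulr1 in h.
by rewrite h mulr1.
Qed.

Lemma sign_opp (a b : bool) : a (+) b -> (-1) ^+ a * (-1) ^+ b = -1 :> int.
Proof. by case: a; case: b. Qed.

Definition cell n := ({set 'I_n} * {set 'I_n})%type.

Definition inc {n} (a b : cell n) : int :=
  \sum_(j in a.2 :\: a.1) sg a.1 a.2 j *
     ((b == (j |: a.1, a.2))%:R - (b == (a.1, a.2 :\ j))%:R).

Definition bd {n} (f : cell n -> int) (b : cell n) : int :=
  \sum_(a : cell n) f a * inc a b.

Lemma sum_eqind (T : finType) (x : T) (h : T -> int) :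
  \sum_c (c == x)%:R * h c = h x.
Proof.
rewrite (bigD1 x) //= eqxx mul1r big1 ?addr0 // => c /negbTE ->.
by rewrite mul0r.
Qed.


Lemma sgn_ltn_swap n (j l : 'I_n) : l != j ->
  (-1) ^+ (l < j)%N = - (-1) ^+ (j < l)%N :> int.
Proof.
move=> ne; case: (ltngtP l j) => h //=.
by move: ne; rewrite (val_inj h) eqxx.
Qed.

Lemma inc_inc0 n (a b : cell n) : \sum_(c : cell n) inc a c * inc c b = 0.
Proof.
case: a => G B; set D := B :\: G.
have step1 : \sum_(c : cell n) inc (G, B) c * inc c b =
   \sum_(j in D) sg G B j * (inc (j |: G, B) b - inc (G, B :\ j) b).
  under eq_bigr => c _ do rewrite [inc (G, B) c]/inc big_distrl /=.
  rewrite exchange_big /=; apply: eq_bigr => j jD.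
  under eq_bigr do rewrite -mulrA mulrBl.
  rewrite -big_distrr /= sumrB.
  by rewrite (sum_eqind (j |: G, B) (fun c => inc c b))
      (sum_eqind (G, B :\ j) (fun c => inc c b)).
rewrite step1 /inc /=.
pose T j l := sg G B j * sg G B l * (-1) ^+ (j < l)%N *
  ((b == (l |: (j |: G), B))%:R - (b == (j |: G, B :\ l))%:R
   - (b == (l |: G, B :\ j))%:R + (b == (G, B :\ j :\ l))%:R : int).
have E : forall j, j \in D ->
    sg G B j * (\sum_(l in B :\: (j |: G)) sg (j |: G) B l *
        ((b == (l |: (j |: G), B))%:R - (b == (j |: G, B :\ l))%:R) -
     \sum_(l in B :\ j :\: G) sg G (B :\ j) l *
        ((b == (l |: G, B :\ j))%:R - (b == (G, B :\ j :\ l))%:R)) =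
    \sum_(l in D :\ j) T j l.
  move=> j jD.
  have e1 : B :\: (j |: G) = D :\ j.
    by apply/setP => l; rewrite !finset.inE; case: (l == j); rewrite ?andbF ?andbT.
  have e2 : B :\ j :\: G = D :\ j.
    by apply/setP => l; rewrite !finset.inE; case: (l == j); rewrite ?andbF ?andbT.
  rewrite e1 e2 -sumrB big_distrr /=; apply: eq_bigr => l lD.
  have s1 : sg (j |: G) B l = sg G B l * (-1) ^+ (j < l)%N.
    by apply: sg_step2; rewrite -/D ?e1 ?finset.setD1K // !finset.inE eqxx.
  have s2 : sg G (B :\ j) l = sg G B l * (-1) ^+ (j < l)%N.
    by apply: sg_step2; rewrite -/D ?e2 ?finset.setD1K // !finset.inE eqxx.
  rewrite s1 s2 /T; ring.
rewrite (eq_bigr _ E).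
pose U j l := if (j \in D) && (l \in D) && (l != j) then T j l else 0.
have EU : \sum_(j in D) \sum_(l in D :\ j) T j l = \sum_j \sum_l U j l.
  rewrite big_mkcond /=; apply: eq_bigr => j _.
  case: ifP => jD; last by rewrite big1 // => l _; rewrite /U jD.
  rewrite big_mkcond /=; apply: eq_bigr => l _.
  by rewrite /U jD !finset.inE andbC.
have UU : forall j l, U l j = - U j l.
  move=> j l; rewrite /U; case: (eqVneq l j) => [->|ne]; first by rewrite !andbF oppr0.
  rewrite /= !andbT [(j \in D) && _]andbC; case: ifP => _; last by rewrite oppr0.
  rewrite /T (sgn_ltn_swap ne) finset.setUCA.
  have -> : B :\ l :\ j = B :\ j :\ l.
    by rewrite !finset.setDDl finset.setUC.
  ring.
rewrite EU; set S := \sum_j _.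
have SS : S = - S.
  rewrite {1}/S exchange_big /= -sumrN; apply: eq_bigr => j _.
  rewrite -sumrN; apply: eq_bigr => l _; exact: UU.
have : S *+ 2 == 0 by rewrite mulr2n {1}SS addNr.
by rewrite mulrn_eq0 /= => /eqP.
Qed.

Lemma bd_bd n (f : cell n -> int) b : bd (bd f) b = 0.
Proof.
rewrite /bd.
under eq_bigr do rewrite big_distrl /=.
rewrite exchange_big /=; apply: big1 => a _.
transitivity (f a * \sum_c inc a c * inc c b); last by rewrite inc_inc0 mulr0.
by rewrite big_distrr /=; apply: eq_bigr => c _; rewrite mulrA.
Qed.

Lemma bd_sub n (f g : cell n -> int) b : bd (fun a => f a - g a) b = bd f b - bd g b.
Proof. by rewrite /bd -sumrB; apply: eq_bigr => a _; rewrite mulrBl. Qed.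

Lemma bd_add n (f g : cell n -> int) b : bd (fun a => f a + g a) b = bd f b + bd g b.
Proof. by rewrite /bd -big_split; apply: eq_bigr => a _; rewrite mulrDl. Qed.

Lemma inc_nz n (a b : cell n) : inc a b != 0 ->
  exists2 j, j \in a.2 :\: a.1 & (b == (j |: a.1, a.2)) || (b == (a.1, a.2 :\ j)).
Proof.
move=> nz; apply/exists_inP; move: nz; apply: contraR => /exists_inP H.
rewrite /inc big1 // => j jD.
have [e1 e2] : b != (j |: a.1, a.2) /\ b != (a.1, a.2 :\ j).
  by split; apply/negP => e; apply: H; exists j => //; rewrite e ?orbT.
by rewrite (negbTE e1) (negbTE e2) subrr mulr0.
Qed.

Definition incube {n} (F : {set {set 'I_n}}) (a : cell n) : bool :=
  (a.1 \subset a.2) &&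
  [forall C : {set 'I_n}, ((a.1 \subset C) && (C \subset a.2)) ==> (C \in F)].

Lemma incubeP n (F : {set {set 'I_n}}) (a : cell n) :
  reflect (a.1 \subset a.2 /\ forall C : {set 'I_n}, a.1 \subset C -> C \subset a.2 -> C \in F)
          (incube F a).
Proof.
apply: (iffP andP) => [[h /forallP H]|[h H]]; split => //.
  by move=> C h1 h2; move: (H C); rewrite h1 h2.
by apply/forallP => C; apply/implyP => /andP[]; apply: H.
Qed.

Lemma cone_claim n (F : {set {set 'I_n}}) : simply_rooted F -> finset.set0 \in F ->
  forall A, A \in F ->
  (forall C : {set 'I_n}, C \subset A -> C \in F) \/
  exists2 x, x \in A & forall G, incube F (G, A) -> x \in G -> incube F (G :\ x, A).
Proof.
move=> SR F0 A; move: {2}#|A|.+1 (ltnSn #|A|) => m; elim: m A => // m IH A Am AF.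
case: (eqVneq A finset.set0) => [->|An0].
  by left => C; rewrite finset.subset0 => /eqP ->.
have [i iA root] := SR A AF An0.
have cardA' : (#|A :\ i| < m)%N.
  by move: Am; rewrite (cardsD1 i A) iA.
have sA' : A :\ i \subset A by apply: subsetDl.
case: (boolP (A :\ i \in F)) => A'F.
  case: (IH _ cardA' A'F) => [all|[x xA' P]].
    left => C CA; case: (boolP (i \in C)) => iC; first exact: root.
    by apply: all; rewrite subsetD1 CA iC.
  right; exists x; first by move: xA'; rewrite !finset.inE => /andP[].
  move=> G /incubeP[/= GA GF] xG; apply/incubeP => /=; split.
    by apply: fintype.subset_trans GA; apply: subsetDl.
  move=> C GC CA; case: (boolP (i \in C)) => iC; first exact: root.
  have ix : i != x by move: xA'; rewrite !finset.inE eq_sym => /andP[].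
  have iG : i \notin G.
    apply: contra iC => iG; apply: (fintype.subsetP GC); by rewrite !finset.inE ix.
  have GA' : G \subset A :\ i by rewrite subsetD1 GA iG.
  have : incube F (G, A :\ i).
    apply/incubeP => /=; split => // C' h1 h2; apply: GF => //.
    exact: fintype.subset_trans h2 sA'.
  move/P => /(_ xG) /incubeP [/= _ H]; apply: H => //.
  by rewrite subsetD1 CA iC.
right.
have A'n0 : A :\ i != finset.set0.
  by apply: contraNneq A'F => ->.
have [x xA'] := set0Pn _ A'n0.
have ix : i != x by move: xA'; rewrite !finset.inE eq_sym => /andP[].
exists x; first by move: xA'; rewrite !finset.inE => /andP[].
move=> G /incubeP[/= GA GF] xG; apply/incubeP => /=; split.
  by apply: fintype.subset_trans GA; apply: subsetDl.
have iG : i \in G.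
  apply: contraR A'F => iG; apply: GF => //; by rewrite subsetD1 GA iG.
move=> C GC CA; apply: root => //; apply: (fintype.subsetP GC); by rewrite !finset.inE ix.
Qed.

Definition ibd {n} (A : {set 'I_n}) (w : {set 'I_n} -> int) (G' : {set 'I_n}) : int :=
  \sum_(j in A :&: G') w (G' :\ j) * sg (G' :\ j) A j.

Lemma inner_bd n (A : {set 'I_n}) (w : {set 'I_n} -> int) G' :
  \sum_G w G * inc (G, A) (G', A) = ibd A w G'.
Proof.
rewrite /inc /ibd /=.
have E : forall G, w G * \sum_(j in A :\: G) sg G A j *
     (((G', A) == (j |: G, A))%:R - ((G', A) == (G, A :\ j))%:R) =
   \sum_j (if (j \in A :\: G) && (G' == j |: G) then w G * sg G A j else 0).
  move=> G; rewrite big_distrr /= big_mkcond /=; apply: eq_bigr => j _.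
  case: ifP => //= jD.
  have -> : ((G', A) == (G, A :\ j)) = false.
    apply/negbTE; apply/negP => /eqP [_ e].
    by move: jD; rewrite !finset.inE => /andP[_]; rewrite {1}e !finset.inE eqxx.
  rewrite xpair_eqE eqxx andbT; case: (G' == j |: G); rewrite /=.
    by rewrite subr0 mulr1.
  by rewrite subrr !mulr0.
rewrite (eq_bigr _ (fun G _ => E G)) exchange_big /= [RHS]big_mkcond /=.
apply: eq_bigr => j _.
case: (boolP (j \in A :&: G')) => jAG.
  have jA : j \in A by move: jAG; rewrite finset.inE => /andP[].
  have jG : j \in G' by move: jAG; rewrite finset.inE => /andP[].
  rewrite -big_mkcond /=; apply: (big_pred1 (G' :\ j)) => G /=.
  rewrite !finset.inE jA andbT; apply/idP/idP.
    move=> /andP[jG0 /eqP ->]; by rewrite setU1K.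
  by move=> /eqP ->; rewrite !finset.inE eqxx /= finset.setD1K.
apply: big1 => G _; case: ifP => // /andP[jD /eqP e].
move: jAG; rewrite e !finset.inE eqxx.
by move: jD; rewrite !finset.inE => /andP[_ ->].
Qed.

Lemma rel_acyclic n (F : {set {set 'I_n}}) (A : {set 'I_n}) k (z : {set 'I_n} -> int) :
  simply_rooted F -> finset.set0 \in F -> A \in F -> A != finset.set0 ->
  (forall G, z G != 0 -> incube F (G, A) && (#|A :\: G| == k)) ->
  (forall G', ibd A z G' = 0) ->
  exists w : {set 'I_n} -> int,
    (forall G, w G != 0 -> incube F (G, A) && (#|A :\: G| == k.+1)) /\
    forall G', ibd A w G' = z G'.
Proof.
move=> SR F0 AF An0 zsupp zcyc.
have [x xA cone] : exists2 x, x \in A &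
    forall G, incube F (G, A) -> x \in G -> incube F (G :\ x, A).
  case: (cone_claim SR F0 AF) => [all|//].
  have [x xA] := set0Pn _ An0; exists x => // G /incubeP[/= GA _] _.
  apply/incubeP => /=; split => [|C _ CA]; last exact: all.
  by apply: fintype.subset_trans GA; apply: subsetDl.
exists (fun G : {set 'I_n} => if x \in G then 0 else sg G A x * z (x |: G)); split.
  move=> G; case: ifP => // xG nz.
  have nz' : z (x |: G) != 0 by apply: contraNneq nz => ->; rewrite mulr0.
  case/andP: (zsupp _ nz') => inc1 /eqP ck.
  have := cone _ inc1; rewrite setU11 setU1K ?xG // => /(_ isT) ->.
  have -> : A :\: G = x |: (A :\: (x |: G)).
    apply/setP => l; rewrite !finset.inE; case: (eqVneq l x) => [->|] //=.
    by rewrite xA xG.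
  by rewrite cardsU1 !finset.inE eqxx /= ck.
move=> G'; rewrite /ibd.
case: (boolP (x \in G')) => xG.
  have xAG : x \in A :&: G' by rewrite finset.inE xA xG.
  rewrite (bigD1 x xAG) /= big1 ?addr0; last first.
    by move=> j /andP[_ jx]; rewrite !finset.inE (eq_sym x j) jx xG /= mul0r.
  rewrite !finset.inE eqxx /= finset.setD1K //.
  by rewrite mulrC mulrA sgK mul1r.
have cyc := zcyc (x |: G'); rewrite /ibd in cyc.
have xAG : x \in A :&: (x |: G') by rewrite !finset.inE xA eqxx.
rewrite (bigD1 x xAG) /= setU1K // in cyc.
have R : \sum_(j in A :&: (x |: G') | j != x)
      z ((x |: G') :\ j) * sg ((x |: G') :\ j) A j =
    \sum_(j in A :&: G') z (x |: (G' :\ j)) * sg (x |: (G' :\ j)) A j.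
  rewrite (eq_bigl (fun j => j \in A :&: G')); last first.
    move=> j; rewrite !finset.inE; case: (eqVneq j x) => [->|] /=.
      by rewrite (negbTE xG) !andbF.
    by rewrite andbT.
  apply: eq_bigr => j /setIP[jA jG].
  have jx : j != x by apply: contraNneq xG => <-.
  have -> // : (x |: G') :\ j = x |: (G' :\ j).
  apply/setP => l; rewrite !finset.inE; case: (eqVneq l x) => [->|] //=.
  by rewrite eq_sym jx.
rewrite R in cyc.
have ee : forall b : bool, (-1) ^+ b * (-1) ^+ b = 1 :> int by case.
have sgid : forall j, j \in A :&: G' ->
   sg (G' :\ j) A x * sg (G' :\ j) A j = - (sg G' A x * sg (x |: (G' :\ j)) A j).
  move=> j /setIP[jA jG].
  have jx : j != x by apply: contraNneq xG => <-.
  have s1 : sg (G' :\ j) A x = sg G' A x * (-1) ^+ (j < x)%N.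
    apply: sg_step.
      apply/setP => l; rewrite !finset.inE; case: (eqVneq l j) => [->|] //=.
    by rewrite !finset.inE jG.
  have s2 : sg (G' :\ j) A j = sg (x |: (G' :\ j)) A j * (-1) ^+ (x < j)%N.
    apply: sg_step.
      apply/setP => l; rewrite !finset.inE; case: (eqVneq l x) => [->|] /=.
        by rewrite xA (negbTE xG) andbF.
      by [].
    by rewrite !finset.inE eqxx.
  rewrite s1 s2 (sgn_ltn_swap (j:=j) (l:=x)) ?(eq_sym x) //.
  set e := (-1) ^+ (j < x)%N.
  have -> : sg G' A x * e * (sg (x |: G' :\ j) A j * - e) =
      - (sg G' A x * sg (x |: G' :\ j) A j) * (e * e) by ring.
  by rewrite /e ee mulr1.
transitivity (\sum_(j in A :&: G') - sg G' A x * (z (x |: (G' :\ j)) * sg (x |: (G' :\ j)) A j)).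
  apply: eq_bigr => j jAG.
  have xGj : (x \in G' :\ j) = false by rewrite !finset.inE (negbTE xG) andbF.
  rewrite xGj -mulrA [z _ * _]mulrC mulrA sgid //.
  by ring.
rewrite -big_distrr /=.
have hs : \sum_(j in A :&: G') z (x |: G' :\ j) * sg (x |: G' :\ j) A j = - (z G' * sg G' A x).
  by apply/eqP; rewrite -addr_eq0 addrC cyc.
by rewrite hs mulrNN mulrC -mulrA sgK mulr1.
Qed.

Lemma sum_pair n (h : cell n -> int) :
  \sum_(a : cell n) h a = \sum_(G : {set 'I_n}) \sum_(B : {set 'I_n}) h (G, B).
Proof. by rewrite pair_bigA /=; apply: eq_bigr => -[]. Qed.

Definition csupp {n} (F : {set {set 'I_n}}) k (f : cell n -> int) :=
  forall a, f a != 0 -> incube F a && (#|a.2 :\: a.1| == k).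

Lemma main_comb n k : (0 < k)%N -> forall (F : {set {set 'I_n}}),
  simply_rooted F -> finset.set0 \in F ->
  forall f : cell n -> int, csupp F k f -> (forall b, bd f b = 0) ->
  exists g, csupp F k.+1 g /\ forall b, bd g b = f b.
Proof.
move=> k0 F; move: {2}#|F|.+1 (ltnSn #|F|) => m; elim: m F => // m IH F Fm SR F0 f fsupp fcyc.
case: (boolP [exists A in F, A != finset.set0]); last first.
  rewrite negb_exists_in => /forall_inP allF.
  have f0 : forall a, f a = 0.
    move=> a; apply/eqP; apply: contraT => /fsupp /andP[/incubeP[s12 H] /eqP ck].
    have a2F : a.2 \in F by apply: H.
    have := allF _ a2F; rewrite negbK => /eqP e2.
    have e1 : a.1 = finset.set0 by apply/eqP; rewrite -finset.subset0 -e2.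
    by move: ck k0; rewrite e1 e2 finset.setD0 cards0 => <-.
  exists (fun _ => 0); split; first by move=> a; rewrite eqxx.
  by move=> b; rewrite f0 /bd big1 // => a _; rewrite mul0r.
case/exists_inP => A0 A0F A0n0.
pose A := [arg max_(A > finset.set0 in F) #|A|].
have [AF Amax] : A \in F /\ forall B, B \in F -> (#|B| <= #|A|)%N.
  by rewrite /A; case: arg_maxnP.
have An0 : A != finset.set0.
  apply: contraNneq A0n0 => eA; move: (Amax _ A0F); rewrite eA cards0 leqn0 cards_eq0.
  by move=> /eqP ->.
have maxA : forall B, B \in F -> A \subset B -> B = A.
  move=> B BF AB; apply/eqP; rewrite eq_sym eqEcard AB; exact: Amax.
pose F' := F :\ A.
have F'm : (#|F'| < m)%N by move: Fm; rewrite (cardsD1 A F) AF.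
have SR' : simply_rooted F'.
  move=> B; rewrite !finset.inE => /andP[BA BF] Bn0.
  have [i iB root] := SR B BF Bn0; exists i => // C iC CB.
  rewrite !finset.inE root // andbT; apply: contraNneq BA => eC.
  by rewrite (maxA B BF) // -eC.
have F0' : finset.set0 \in F' by rewrite !finset.inE F0 andbT eq_sym.
have incF : forall a, incube F a -> a.2 \in F.
  by move=> a /incubeP[s H]; apply: H.
pose z G := f (G, A).
have bdA : forall (h : cell n -> int), (forall a, h a != 0 -> incube F a) ->
    forall G', bd h (G', A) = ibd A (fun G => h (G, A)) G'.
  move=> h hs G'; rewrite -inner_bd /bd sum_pair; apply: eq_bigr => G _.
  rewrite (bigD1 A) //= big1 ?addr0 // => B BA.
  case: (eqVneq (h (G, B)) 0) => [->|hnz]; first by rewrite mul0r.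
  case: (eqVneq (inc (G, B) (G', A)) 0) => [->|]; first by rewrite mulr0.
  case/inc_nz => j /= jD /orP[] /eqP [e1 e2].
    by move: BA; rewrite e2 eqxx.
  have BF := incF _ (hs _ hnz).
  have AB : A \subset B by rewrite e2 subsetDl.
  by move: BA; rewrite (maxA B BF AB) eqxx.
have zsupp : forall G, z G != 0 -> incube F (G, A) && (#|A :\: G| == k).
  by move=> G /fsupp.
have zcyc : forall G', ibd A z G' = 0.
  move=> G'; rewrite -(fcyc (G', A)) bdA //.
  by move=> a /fsupp /andP[].
have [w [wsupp wbd]] := rel_acyclic SR F0 AF An0 zsupp zcyc.
pose W (a : cell n) := if a.2 == A then w a.1 else 0.
have Wsupp : csupp F k.+1 W.
  case=> G B; rewrite /W /=; case: (eqVneq B A) => [->|BA].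
    by apply: wsupp.
  by rewrite eqxx.
have WA : forall G, bd W (G, A) = z G.
  move=> G; rewrite bdA; last by move=> a /Wsupp /andP[].
  by rewrite /W /= eqxx wbd.
pose f' a := f a - bd W a.
have f'supp : csupp F' k f'.
  case=> G B; rewrite /f'.
  case: (eqVneq B A) => [->|BA]; first by rewrite WA subrr eqxx.
  have toF' : incube F (G, B) -> incube F' (G, B).
    move=> /incubeP[/= s H]; apply/incubeP; split => // C h1 h2.
    rewrite !finset.inE H // andbT; apply/negP => /eqP eC; move/negP: BA; apply; apply/eqP.
    by apply: maxA; [apply: H | rewrite -eC].
  case: (eqVneq (f (G, B)) 0) => [->|fnz] nz.
    have : bd W (G, B) != 0 by apply: contraNneq nz => ->; rewrite subrr.
    move=> bnz.
    have : [exists a, W a * inc a (G, B) != 0].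
      apply: contraR bnz => /existsPn H; rewrite /bd big1 // => a _.
      by apply/eqP; move: (H a); rewrite negbK.
    case/existsP => -[G0 B0]; rewrite /W /=.
    case: (eqVneq B0 A) => [->|]; last by rewrite mul0r eqxx.
    case: (eqVneq (w G0) 0) => [->|wnz]; first by rewrite mul0r eqxx.
    case/andP: (wsupp _ wnz) => /incubeP[/= s0 H0] /eqP ck.
    move=> inz; have inz' : inc (G0, A) (G, B) != 0.
      by apply: contraNneq inz => ->; rewrite mulr0.
    case/inc_nz: inz' => j /= jD /orP[] /eqP [e1 e2].
      by move: BA; rewrite e2 eqxx.
    have jG0 : j \notin G0 by move: jD; rewrite finset.inE => /andP[].
    have jA : j \in A by move: jD; rewrite finset.inE => /andP[].
    apply/andP; split.
      apply: toF'; rewrite e1 e2; apply/incubeP; split => /=.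
        by rewrite subsetD1 s0 jG0.
      move=> C h1 h2; apply: H0 => //; apply: fintype.subset_trans h2 _; exact: subsetDl.
    rewrite /= e1 e2.
    have -> : A :\ j :\: G0 = (A :\: G0) :\ j.
      by rewrite finset.setDDl finset.setDDl finset.setUC.
    by move: ck; rewrite (cardsD1 j) jD add1n => -[->].
  by case/andP: (fsupp _ fnz) => /toF' -> ->.
have f'cyc : forall b, bd f' b = 0.
  by move=> b; rewrite /f' bd_sub fcyc bd_bd subrr.
have [g' [g'supp g'bd]] := IH F' F'm SR' F0' f' f'supp f'cyc.
exists (fun a => W a + g' a); split.
  move=> a nz; case: (eqVneq (W a) 0) => [W0|Wnz]; last exact: Wsupp.
  rewrite W0 add0r in nz.
  case/andP: (g'supp a nz) => /incubeP[s H] ->; rewrite andbT.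
  apply/incubeP; split => // C h1 h2; move: (H C h1 h2); rewrite !finset.inE => /andP[].
  by [].
by move=> b; rewrite bd_add g'bd /f' addrC subrK.
Qed.
Local Open Scope classical_set_scope.
Local Open Scope ring_scope.
Definition seg (R : realType) n (p q : 'rV[R]_n) : set 'rV[R]_n :=
  (fun t : R => p + t *: (q - p)) @` `[0, 1].

Lemma seg_connected (R : realType) n (p q : 'rV[R]_n) : connected (seg p q).
Proof.
apply: connected_continuous_connected; first exact: segment_connected.
apply: continuous_subspaceT => t.
have h1 : {for t, continuous (fun=> p : 'rV[R]_n)} by exact: cst_continuous.
have h2 : {for t, continuous (fun u : R => u *: (q - p))}.
  by apply: continuousZr_tmp.
exact: (continuousD h1 h2).
Qed.

Lemma int_bnd (R : realType) (a lo hi : int) :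
  (lo%:~R : R) < a%:~R -> (a%:~R : R) < hi%:~R -> (lo < a)%R /\ (a < hi)%R.
Proof. by rewrite !ltr_int. Qed.

Lemma coord_facts (R : realType) (a : int) (b : bool) (inS inT : bool) :
  (inS -> (a%:~R + b%:R / 2 : R) = 1) ->
  (inT -> ~~ inS -> 0 <= (a%:~R + b%:R / 2 : R) <= 1) ->
  (~~ inT -> (a%:~R + b%:R / 2 : R) = 0) ->
  (inS -> (a, b) = (1, false)) /\ (~~ inT -> (a, b) = (0, false)) /\
  [\/ (a, b) = (1, false), (a, b) = (0, true) | (a, b) = (0, false)].
Proof.
move=> hS hST hT.
have m1 : ((-1 : int)%:~R : R) = -1 by rewrite mulrN1z.
have c0 : ((0 : int)%:~R : R) = 0 by [].
have c1 : ((1 : int)%:~R : R) = 1 by [].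
have c2 : ((2 : int)%:~R : R) = 2 by [].
case: b hS hST hT => /= hS hST hT.
  have nS : ~~ inS.
    apply/negP => /hS e.
    have [h1 h2] := @int_bnd R a 0 1 ltac:(rewrite c0; lra) ltac:(rewrite c1; lra).
    lia.
  have iT : inT.
    apply/negPn/negP => /hT e.
    have [h1 h2] := @int_bnd R a (-1) 0 ltac:(rewrite m1; lra) ltac:(rewrite c0; lra).
    lia.
  have /andP[h3 h4] := hST iT nS.
  have [h1 h2] := @int_bnd R a (-1) 1 ltac:(rewrite m1; lra) ltac:(rewrite c1; lra).
  have -> : a = 0 by lia.
  split; first by move=> /(negP nS).
  by split; [rewrite iT | constructor 2].
have ex : (a%:~R + false%:R / 2 : R) = a%:~R by rewrite mul0r addr0.
split.
  move=> /hS e; rewrite ex in e.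
  have [h1 h2] := @int_bnd R a 0 2 ltac:(rewrite c0; lra) ltac:(rewrite c2; lra).
  by have -> : a = 1 by lia.
split.
  move=> /hT e; rewrite ex in e.
  have [h1 h2] := @int_bnd R a (-1) 1 ltac:(rewrite m1; lra) ltac:(rewrite c1; lra).
  by have -> : a = 0 by lia.
case: (boolP inS) => iS.
  have e := hS iS; rewrite ex in e.
  have [h1 h2] := @int_bnd R a 0 2 ltac:(rewrite c0; lra) ltac:(rewrite c2; lra).
  have -> : a = 1 by lia.
  by constructor 1.
case: (boolP inT) => iT.
  have /andP[h3 h4] := hST iT iS; rewrite ex in h3 h4.
  have [h1 h2] := @int_bnd R a (-1) 2 ltac:(rewrite m1; lra) ltac:(rewrite c2; lra).
  have : (a = 0) \/ (a = 1) by lia.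
  by case=> ->; [constructor 3 | constructor 1].
have e := hT iT; rewrite ex in e.
have [h1 h2] := @int_bnd R a (-1) 1 ltac:(rewrite m1; lra) ltac:(rewrite c1; lra).
have -> : a = 0 by lia.
by constructor 3.
Qed.

Definition cube_of {n} (a : cell n) : ecube n :=
  [ffun i => if i \in a.1 then ((1 : int), false)
             else if i \in a.2 then ((0 : int), true) else ((0 : int), false)].

Lemma cube_set_sub (R : realType) n (F : {set {set 'I_n}}) (a : cell n) :
  incube F a -> @ecube_set R n (cube_of a) `<=` geom_real F.
Proof.
move=> /incubeP[s H] x hx; exists a.1, a.2; split; first by split.
move=> i; have := hx i; rewrite ffunE.
case: (boolP (i \in a.1)) => i1 /=.
  move=> h; split; first by move=> _; apply/le_anti; rewrite andbC; move: h; rewrite addr0.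
  split => // i2; exfalso; move: i2; by rewrite (fintype.subsetP s i i1).
case: (boolP (i \in a.2)) => i2 /= h.
  by split => //; split.
split => //; split => // _; apply/le_anti; rewrite andbC; move: h; rewrite addr0.
by [].
Qed.

Lemma sub_cube (R : realType) n (F : {set {set 'I_n}}) (Q : ecube n) :
  @ecube_set R n Q `<=` geom_real F -> exists a, incube F a /\ Q = cube_of a.
Proof.
move=> hsub.
pose x : 'rV[R]_n := \row_i (((Q i).1)%:~R + ((Q i).2)%:R / 2).
have xQ : @ecube_set R n Q x.
  move=> i; rewrite mxE; case: (Q i) => a [] /=.
    rewrite intrD; apply/andP; split; lra.
  by rewrite mul0r !addr0 lexx.
have := hsub _ xQ; move=> [A' [B' [hc hx]]]; case: hc => sAB HF.
have cf : forall i, 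
  (i \in A' -> Q i = (1, false)) /\ (i \notin B' -> Q i = (0, false)) /\
  [\/ Q i = (1, false), Q i = (0, true) | Q i = (0, false)].
  move=> i; have [h1 [h2 h3]] := hx i; rewrite mxE in h1 h2 h3.
  have e : Q i = ((Q i).1, (Q i).2) by case: (Q i).
  rewrite e; apply: coord_facts; [exact: h1 | exact: h2 | exact: h3].
pose a0 : cell n := ([set i | Q i == (1, false)]%SET, [set i | Q i != (0, false)]%SET).
exists a0; split.
  apply/incubeP; split => /=.
    by apply/fintype.subsetP => i; rewrite !finset.inE => /eqP ->.
  move=> C h1 h2; apply: HF.
    apply/fintype.subsetP => i iA; apply: (fintype.subsetP h1).
    by rewrite /a0 /= finset.inE; have [H1 _] := cf i; rewrite (H1 iA).
  apply/fintype.subsetP => i iC; have := fintype.subsetP h2 i iC.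
  rewrite /a0 /= finset.inE; apply: contraR => iB.
  by have [_ [H2 _]] := cf i; rewrite (H2 iB).
apply/ffunP => i; rewrite ffunE /= !finset.inE.
by have [_ [_ [->|->|->]]] := cf i.
Qed.

Lemma seg_sub (R : realType) n (S T : {set 'I_n}) (p q : 'rV[R]_n) :
  real_interval S T p -> real_interval S T q -> seg p q `<=` real_interval S T.
Proof.
move=> hp hq _ [t t01 <-] i.
move: t01; rewrite /= in_itv /= => /andP[t0 t1].
have [p1 [p2 p3]] := hp i; have [q1 [q2 q3]] := hq i.
rewrite !mxE; split.
  by move=> iS; rewrite (p1 iS) (q1 iS) subrr mulr0 addr0.
split.
  move=> iT iS; have /andP[a1 a2] := p2 iT iS; have /andP[b1 b2] := q2 iT iS.
  by apply/andP; split; nra.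
by move=> iT; rewrite (p3 iT) (q3 iT) subrr mulr0 addr0.
Qed.

Lemma seg_ends (R : realType) n (p q : 'rV[R]_n) : seg p q p /\ seg p q q.
Proof.
split.
  exists 0; first by rewrite /= in_itv /= lexx ler01.
  by rewrite scale0r addr0.
exists 1; first by rewrite /= in_itv /= lexx ler01.
by rewrite scale1r addrC subrK.
Qed.

Lemma cc_cube (R : realType) n (F : {set {set 'I_n}}) (S T : {set 'I_n}) (p q : 'rV[R]_n) :
  is_cube_of F S T -> real_interval S T p -> real_interval S T q ->
  connected_component (geom_real F) p q.
Proof.
move=> hc hp hq; have [sp sq] := seg_ends p q.
exists (seg p q) => //; split => //; last exact: seg_connected.
by move=> y /(seg_sub hp hq) hy; exists S, T.
Qed.

Definition ev (R : realType) n (S : {set 'I_n}) : 'rV[R]_n :=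
  \row_i (if i \in S then 1 else 0).
Arguments ev {R n}.

Lemma ev_in (R : realType) n (S U T : {set 'I_n}) :
  S \subset U -> U \subset T -> real_interval S T (@ev R n U).
Proof.
move=> SU UT i; rewrite mxE; split.
  by move=> iS; rewrite (fintype.subsetP SU i iS).
split.
  by move=> _ _; case: ifP => _; rewrite lexx ?ler01.
move=> iT; case: ifP => // iU; exfalso; move: iT.
by rewrite (fintype.subsetP UT i iU).
Qed.

Lemma X_connected (R : realType) n (F : {set {set 'I_n}}) :
  simply_rooted F -> finset.set0 \in F -> connected (@geom_real R n F).
Proof.
move=> SR F0.
set X := geom_real F.
pose o : 'rV[R]_n := ev finset.set0.
have base : forall x, X x -> connected_component X o x.
  move=> x [A [B [hc hx]]].
  have [sAB HF] := hc.
  have c1 : connected_component X (ev A : 'rV[R]_n) x.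
    by apply: (cc_cube hc); [apply: ev_in | ].
  apply: (connected_component_trans _ c1).
  case: (eqVneq A finset.set0) => [eA|An0].
    rewrite /o -eA; apply: connected_component_refl; exists A, B; split => //.
    by apply: ev_in.
  have AF : A \in F by apply: HF.
  have [r rA root] := SR A AF An0.
  have c2 : connected_component X (ev [set r]%SET) (ev A).
    apply: (@cc_cube _ _ _ [set r]%SET A).
    - split; first by rewrite finset.sub1set.
      by move=> C; rewrite finset.sub1set; apply: root.
    - by apply: ev_in; rewrite ?fintype.subxx ?finset.sub1set.
    - by apply: ev_in; rewrite ?fintype.subxx ?finset.sub1set.
  apply: (connected_component_trans _ c2).
  apply: (@cc_cube _ _ _ finset.set0 [set r]%SET).
  - split; first by apply: finset.sub0set.
    move=> C _; rewrite finset.subset1 => /orP[/eqP ->|/eqP ->] //.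
    by apply: root; rewrite ?finset.set11 ?finset.sub1set.
  - by apply: ev_in; rewrite ?finset.sub0set.
  - by apply: ev_in; rewrite ?finset.sub0set ?fintype.subxx.
have -> : X = connected_component X o.
  apply/seteqP; split; first exact: base.
  exact: connected_component_sub.
exact: component_connected.
Qed.

Lemma in_cset n (b : 'I_n -> bool) i : (i \in [set j | b j]) = b i.
Proof. by apply/idP/idP => h; [exact: (set_mem h) | exact: mem_set]. Qed.

Lemma coeff_cons n (p : int * ecube n) (c : chain n) Q :
  coeff (p :: c) Q = (if p.2 == Q then p.1 else 0) + coeff c Q.
Proof. by rewrite /coeff big_cons; case: ifP => _; rewrite ?add0r. Qed.

Lemma coeff_nil n (Q : ecube n) : coeff [::] Q = 0.
Proof. by rewrite /coeff big_nil. Qed.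

Lemma coeff_cat n (c1 c2 : chain n) Q : coeff (c1 ++ c2) Q = coeff c1 Q + coeff c2 Q.
Proof. by rewrite /coeff big_cat. Qed.

Lemma coeff_map_mul n (x : int) (l : chain n) Q :
  coeff [seq (x * q.1, q.2) | q <- l] Q = x * coeff l Q.
Proof. by rewrite /coeff big_map big_distrr. Qed.

Lemma coeff_boundary n (c : chain n) Q :
  coeff (boundary c) Q = \sum_(p <- c) p.1 * coeff (ecube_boundary p.2) Q.
Proof.
elim: c => [|p c IH]; first by rewrite big_nil /boundary /= coeff_nil.
by rewrite big_cons -IH /boundary /= coeff_cat coeff_map_mul.
Qed.

Lemma coeff_nz n (c : chain n) Q : coeff c Q != 0 -> exists2 p, p \in c & p.2 = Q.
Proof.
elim: c => [|p c IH]; first by rewrite coeff_nil eqxx.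
rewrite coeff_cons; case: (eqVneq p.2 Q) => [e _|ne]; first by exists p; rewrite ?mem_head.
rewrite add0r => /IH [q qc e]; exists q => //; by rewrite in_cons qc orbT.
Qed.

Lemma cube_of_mem1 n (a : cell n) i : (i \in a.1) = (cube_of a i == ((1 : int), false)).
Proof. by rewrite ffunE; case: ifP => //; case: ifP. Qed.

Lemma cube_of_mem2 n (a : cell n) i : a.1 \subset a.2 ->
  (i \in a.2) = (cube_of a i != ((0 : int), false)).
Proof.
move=> s; rewrite ffunE; case: ifP => [i1|_]; last by case: ifP.
by rewrite (fintype.subsetP s i i1).
Qed.

Lemma cube_of_inj n (a b : cell n) : a.1 \subset a.2 -> b.1 \subset b.2 ->
  cube_of a = cube_of b -> a = b.
Proof.
case: a b => [a1 a2] [b1 b2] /= sa sb e.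
have e1 : a1 = b1 by apply/finset.setP => i;
  rewrite (cube_of_mem1 (a1, a2)) (cube_of_mem1 (b1, b2)) e.
have e2 : a2 = b2 by apply/finset.setP => i;
  rewrite (cube_of_mem2 (a := (a1, a2))) // (cube_of_mem2 (a := (b1, b2))) // e.
by rewrite e1 e2.
Qed.

Lemma cube_of_snd n (a : cell n) i : (cube_of a i).2 = (i \in a.2 :\: a.1).
Proof. by rewrite ffunE finset.inE; case: ifP => //; case: ifP. Qed.

Lemma ecube_dim_cube n (a : cell n) : ecube_dim (cube_of a) = #|a.2 :\: a.1|.
Proof. by rewrite /ecube_dim; apply: eq_card => i; rewrite in_cset cube_of_snd finset.inE. Qed.

Lemma upd1_cube n (a : cell n) i : i \in a.2 :\: a.1 ->
  ecube_upd (cube_of a) i ((cube_of a i).1 + 1, false) = cube_of (i |: a.1, a.2).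
Proof.
rewrite finset.inE => /andP[ni1 i2]; apply/ffunP => j; rewrite !ffunE /=.
case: (eqVneq j i) => [->|ji].
  by rewrite (negbTE ni1) i2 finset.setU11.
by rewrite finset.in_setU1 (negbTE ji).
Qed.

Lemma upd0_cube n (a : cell n) i : i \in a.2 :\: a.1 ->
  ecube_upd (cube_of a) i ((cube_of a i).1, false) = cube_of (a.1, a.2 :\ i).
Proof.
rewrite finset.inE => /andP[ni1 i2]; apply/ffunP => j; rewrite !ffunE /=.
case: (eqVneq j i) => [->|ji].
  by rewrite (negbTE ni1) i2 finset.setD11.
by rewrite finset.in_setD1 ji.
Qed.

Lemma sgn_cube n (a : cell n) i : ecube_sgn (cube_of a) i = sg a.1 a.2 i.
Proof.
rewrite /ecube_sgn /sg; congr (_ ^+ _); apply: eq_card => j.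
by rewrite in_cset !finset.inE cube_of_snd finset.inE.
Qed.

Lemma coeff_ecube_boundary n (a : cell n) Q :
  coeff (ecube_boundary (cube_of a)) Q =
  \sum_(j in a.2 :\: a.1) sg a.1 a.2 j *
     ((Q == cube_of (j |: a.1, a.2))%:R - (Q == cube_of (a.1, a.2 :\ j))%:R).
Proof.
rewrite /ecube_boundary /coeff big_flatten big_map big_enum /= [RHS]big_mkcond /=.
apply: eq_bigr => i _; rewrite cube_of_snd.
case: ifP => iD; last by rewrite big_nil.
rewrite big_cons big_cons big_nil /= upd1_cube // upd0_cube // sgn_cube.
rewrite !(eq_sym Q).
case: (cube_of (i |: a.1, a.2) == Q); case: (cube_of (a.1, a.2 :\ i) == Q) => /=; ring.
Qed.

Definition valid {n} (a : cell n) := a.1 \subset a.2.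

Lemma valid_face1 n (a : cell n) j : valid a -> j \in a.2 :\: a.1 -> valid (j |: a.1, a.2).
Proof.
rewrite /valid /= finset.inE => s /andP[_ j2].
by rewrite finset.subUset finset.sub1set j2 s.
Qed.

Lemma valid_face0 n (a : cell n) j : valid a -> j \in a.2 :\: a.1 -> valid (a.1, a.2 :\ j).
Proof.
rewrite /valid /= finset.inE => s /andP[j1 _].
by rewrite finset.subsetD1 s j1.
Qed.

Lemma coeff_ebd_cube n (a b : cell n) : valid a -> valid b ->
  coeff (ecube_boundary (cube_of a)) (cube_of b) = inc a b.
Proof.
move=> va vb; rewrite coeff_ecube_boundary /inc; apply: eq_bigr => j jD.
have e : forall c, valid c -> (cube_of b == cube_of c) = (b == c).
  move=> c vc; apply/eqP/eqP => [|-> //]; exact: cube_of_inj.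
by rewrite !e //; [apply: valid_face0 | apply: valid_face1].
Qed.

Lemma coeff_ebd_out n (a : cell n) Q : valid a -> (forall b, valid b -> Q != cube_of b) ->
  coeff (ecube_boundary (cube_of a)) Q = 0.
Proof.
move=> va hQ; rewrite coeff_ecube_boundary big1 // => j jD.
rewrite (negbTE (hQ _ (valid_face1 va jD))) (negbTE (hQ _ (valid_face0 va jD))).
by rewrite subrr mulr0.
Qed.

Lemma sum_chain n (c : chain n) (h : ecube n -> int) :
  (forall p, p \in c -> exists2 a, valid a & p.2 = cube_of a) ->
  \sum_(p <- c) p.1 * h p.2 =
  \sum_(a : cell n) (if valid a then coeff c (cube_of a) else 0) * h (cube_of a).
Proof.
elim: c => [|p c IH] hc.
  by rewrite big_nil big1 // => a _; rewrite coeff_nil; case: ifP => _; rewrite mul0r.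
have [a0 va0 e0] := hc p (mem_head _ _).
rewrite big_cons IH; last by move=> q qc; apply: hc; rewrite in_cons qc orbT.
transitivity (\sum_(a : cell n) (if valid a && (p.2 == cube_of a) then p.1 else 0) * h (cube_of a) +
   \sum_(a : cell n) (if valid a then coeff c (cube_of a) else 0) * h (cube_of a)).
  congr (_ + _); rewrite (bigD1 a0) //= va0 e0 eqxx /= big1 ?addr0 // => a ne.
  case: ifP => [/andP[va /eqP e]|]; last by rewrite mul0r.
  by move: ne; rewrite (cube_of_inj va0 va e) eqxx.
rewrite -big_split /=; apply: eq_bigr => a _.
rewrite coeff_cons; case: (valid a) => /=; last by rewrite !mul0r addr0.
by rewrite mulrDl.
Qed.

Lemma bd_list n (c : chain n) :
  (forall p, p \in c -> exists2 a, valid a & p.2 = cube_of a) ->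
  forall b, valid b ->
  coeff (boundary c) (cube_of b) = bd (fun a => if valid a then coeff c (cube_of a) else 0) b.
Proof.
move=> hc b vb; rewrite coeff_boundary (sum_chain (fun Q => coeff (ecube_boundary Q) (cube_of b)) hc) /bd; apply: eq_bigr => a _.
by case: ifP => va; rewrite ?mul0r // coeff_ebd_cube.
Qed.

Lemma inc_valid n (a b : cell n) : valid a -> inc a b != 0 -> valid b.
Proof.
move=> va /inc_nz [j jD /orP[] /eqP ->]; [exact: valid_face1 | exact: valid_face0].
Qed.

Theorem theorem1 (R : realType) (n : nat) (F : {set {set 'I_n}}) :
  (1 <= n)%N -> simply_rooted F -> (finset.set0 : {set 'I_n}) \in F -> acyclic (@geom_real R n F).
Proof.
move=> _ SR F0; split.
  exists (ev finset.set0), finset.set0, finset.set0; split.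
    split => // C _; rewrite finset.subset0 => /eqP ->; exact: F0.
  by apply: ev_in.
split; first exact: X_connected.
move=> k k1 c cin ccyc.
have cubes : forall p, p \in c ->
    exists2 a, incube F a && (#|a.2 :\: a.1| == k) & p.2 = cube_of a.
  move=> p pc; have [hs hd] := cin p pc.
  have [a [ia e]] := sub_cube hs; exists a => //.
  by rewrite ia /= -ecube_dim_cube -e hd.
have cubesv : forall p, p \in c -> exists2 a, valid a & p.2 = cube_of a.
  move=> p pc; have [a /andP[/incubeP[s _] _] e] := cubes p pc; by exists a.
pose f (a : cell n) := if valid a then coeff c (cube_of a) else 0.
have fsupp : csupp F k f.
  move=> a; rewrite /f; case: ifP => va; last by rewrite eqxx.
  move=> /coeff_nz [p pc e]; have [a' ha' e'] := cubes p pc.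
  have va' : valid a' by case/andP: ha' => /incubeP[].
  by rewrite -(cube_of_inj va' va) // -e' e.
have fcyc : forall b, bd f b = 0.
  move=> b; case: (boolP (valid b)) => vb.
    by rewrite -bd_list // ccyc.
  rewrite /bd big1 // => a _; rewrite /f; case: ifP => va; last by rewrite mul0r.
  case: (eqVneq (inc a b) 0) => [->|nz]; first by rewrite mulr0.
  by move: vb; rewrite (inc_valid va nz).
have [g [gsupp gbd]] := main_comb k1 SR F0 fsupp fcyc.
exists [seq (g a, cube_of a) | a <- enum [pred a : cell n | g a != 0]]; split.
  move=> p /mapP [a]; rewrite mem_enum /= => ga ->.
  have /andP[ia /eqP ck] := gsupp a ga.
  by split; [exact: cube_set_sub | rewrite /= ecube_dim_cube ck].
move=> Q.
have dv : forall p, p \in [seq (g a, cube_of a) | a <- enum [pred a : cell n | g a != 0]] ->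
    exists2 a, valid a & p.2 = cube_of a.
  move=> p /mapP [a]; rewrite mem_enum /= => ga ->; exists a => //.
  by have /andP[/incubeP[]] := gsupp a ga.
have gv : forall a, g a != 0 -> valid a.
  by move=> a /gsupp /andP[/incubeP[]].
case: (boolP [exists b : cell n, valid b && (Q == cube_of b)]).
  case/existsP => b /andP[vb /eqP ->].
  rewrite bd_list // (_ : coeff c (cube_of b) = f b); last by rewrite /f vb.
  rewrite -gbd /bd; apply: eq_bigr => a _.
  case: ifP => va; last first.
    case: (eqVneq (g a) 0) => [->|ga]; first by rewrite !mul0r.
    by move: va; rewrite gv.
  congr (_ * _).
  rewrite /coeff big_map big_enum_cond /= big_mkcond /=.
  rewrite (bigD1 a) //= big1 ?addr0.
    have -> : (a \in [pred a0 : cell n | g a0 != 0]) = (g a != 0) by [].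
    by rewrite eqxx andbT; case: (eqVneq (g a) 0).
  move=> a' ne; case: ifP => // /andP[ga' /eqP e].
  by move: ne; rewrite (cube_of_inj (gv _ ga') va e) eqxx.
rewrite negb_exists => /forallP hQ.
have hQ' : forall b, valid b -> Q != cube_of b.
  by move=> b vb; move: (hQ b); rewrite vb.
transitivity (0 : int).
  rewrite coeff_boundary big1_seq // => p /andP[_ pd].
  have [a va ->] := dv p pd; by rewrite coeff_ebd_out // mulr0.
rewrite /coeff big1_seq // => p /andP[/eqP e pc].
have [a va e'] := cubesv p pc; by move: (hQ' a va); rewrite -e' e eqxx.
Qed.
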